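(* For every return morphism $\sigma:\mathcal{A}^*\to\mathcal{A}^*$ and every total order $\le$ on $\mathcal{A}$, there exists a unique total order $\preceq$ on $\mathcal{A}$ such that $\sigma$ is left order preserving from $\preceq$ to $\le$; likewise there exists a unique total order $\preceq'$ on $\mathcal{A}$ such that $\sigma$ is right order preserving from $\preceq'$ to $\le$.
   Context: A return morphism for $w\in\mathcal{A}^+$ is an injective non-erasing morphism $\sigma:\mathcal{A}^*\to\mathcal{A}^*$ such that for each $a$, $\sigma(a)w$ contains exactly two occurrences of $w$, as proper prefix and proper suffix ($w$ taken of maximal length if unspecified). For $s,p\in\mathcal{A}^*$: $\mathcal{A}^L_{\sigma,s}=\{a:\sigma(a)\in\mathcal{A}^+s\}$, $\mathcal{A}^R_{\sigma,p}=\{a:\sigma(a)w\in p\mathcal{A}^+\}$; $\varphi^L_{\sigma,s}$ maps $a\in\mathcal{A}^L_{\sigma,s}$ to the letter $a'$ with $\sigma(a)\in\mathcal{A}^*a's$, $\varphi^R_{\sigma,p}$ maps $b\in\mathcal{A}^R_{\sigma,p}$ to the letter $b'$ with $\sigma(b)w\in pb'\mathcal{A}^*$. $\mathcal{T}^L(\sigma)$ is the set of longest common suffixes of $\sigma(a),\sigma(b)$ for $a\ne b$, $\mathcal{T}^R(\sigma)$ the set of longest common prefixes of $\sigma(a)w,\sigma(b)w$ for $a\ne b$. A partial map $\varphi$ is order preserving from $\preceq$ to $\le$ if $x\prec y$ implies $\varphi(x)\le\varphi(y)$ for all $x,y$ in its domain. $\sigma$ is left (resp. right) order preserving from $\preceq$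 to $\le$ if $\varphi^L_{\sigma,s}$ for every $s\in\mathcal{T}^L(\sigma)$ (resp. $\varphi^R_{\sigma,p}$ for every $p\in\mathcal{T}^R(\sigma)$) is order preserving from $\preceq$ to $\le$. *)

(* Defs.v *)
(* Words over a finite alphabet A are [seq A]; a morphism
   sigma : A^* -> A^* is given by the images of letters. *)
From mathcomp Require Import all_boot.
Set Implicit Arguments. Unset Strict Implicit. Unset Printing Implicit Defensive.

Section Words.
Variable A : finType.
Implicit Types (sigma : A -> seq A) (u v w s p : seq A) (R : rel A).

Definition morph sigma u : seq A := flatten (map sigma u).

Definition occurs_at w u (i : nat) : bool :=
  (i + size w <= size u) && (take (size w) (drop i u) == w).

Definition return_morphism_for sigma w : Prop :=
  [/\ w != [::],
      injective (morph sigma),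
      (forall a, sigma a != [::]) &
      (forall a i, occurs_at w (sigma a ++ w) i <-> (i = 0 \/ i = size (sigma a)))].

Definition return_morphism sigma w : Prop :=
  return_morphism_for sigma w /\
  (forall w', return_morphism_for sigma w' -> size w' <= size w).

Fixpoint lcp u v : seq A :=
  match u, v with
  | x :: u', y :: v' => if x == y then x :: lcp u' v' else [::]
  | _, _ => [::]
  end.
Definition lcs u v : seq A := rev (lcp (rev u) (rev v)).

Definition TL sigma s : Prop := exists a b, a != b /\ s = lcs (sigma a) (sigma b).
Definition TR sigma w p : Prop :=
  exists a b, a != b /\ p = lcp (sigma a ++ w) (sigma b ++ w).

(* graphs of the partial maps phi^L_{sigma,s} and phi^R_{sigma,p}:
   phiL sigma s a a'  <->  a \in A^L_{sigma,s} and phi^L_{sigma,s}(a) = a' *)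
Definition phiL sigma s (a a' : A) : Prop := exists t, sigma a = t ++ a' :: s.
Definition phiR sigma w p (b b' : A) : Prop := exists t, sigma b ++ w = p ++ b' :: t.

Definition total_order R : Prop :=
  [/\ reflexive R, antisymmetric R, transitive R & total R].

Definition strict R (x y : A) : bool := R x y && (x != y).

Definition order_preserving (phi : A -> A -> Prop) (pre le : rel A) : Prop :=
  forall x y x' y', phi x x' -> phi y y' -> strict pre x y -> le x' y'.

Definition left_order_preserving sigma (pre le : rel A) : Prop :=
  forall s, TL sigma s -> order_preserving (phiL sigma s) pre le.
Definition right_order_preserving sigma w (pre le : rel A) : Prop :=
  forall p, TR sigma w p -> order_preserving (phiR sigma w p) pre le.

(* there is a unique total order satisfying P (uniqueness up to extensional equality) *)
Definition unique_total_order (P : rel A -> Prop) : Prop :=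
  exists R, [/\ total_order R, P R &
    forall R', total_order R' -> P R' -> R' =2 R].

End Words.

(* Main.v *)
Require Import Defs.
From mathcomp Require Import all_boot.
Set Implicit Arguments. Unset Strict Implicit. Unset Printing Implicit Defensive.

Section Abs.
Variable A : finType.
Variable f : A -> seq A.
Variable le : rel A.
Hypothesis Hle : total_order le.
Hypothesis Hpre : forall a b t, f b = f a ++ t -> a = b.

Fixpoint lex (u v : seq A) : bool :=
  match u, v with
  | [::], _ => true
  | _ :: _, [::] => false
  | x :: u', y :: v' => if x == y then lex u' v' else le x y
  end.

Lemma lex_refl u : lex u u.
Proof. by elim: u => //= x u IH; rewrite eqxx. Qed.

Lemma lex_trans u v r : lex u v -> lex v r -> lex u r.
Proof.
case: Hle => Hr Ha Ht Htot.
elim: u v r => [//|x u IH] [|y v] [|z r] //=.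
case: (eqVneq x y) => [exy|nxy].
  subst y; case: (eqVneq x z) => [exz|nxz]; first exact: IH.
  by move=> _.
case: (eqVneq y z) => [eyz|nyz] Hxy.
  by subst z; move=> _; rewrite (negPf nxy).
move=> Hyz; case: (eqVneq x z) => [exz|nxz].
  by subst z; move: nxy; rewrite (Ha x y) ?Hxy ?Hyz ?eqxx.
exact: Ht Hxy Hyz.
Qed.

Lemma lex_cat p x y t u : x != y -> lex (p ++ x :: t) (p ++ y :: u) = le x y.
Proof. move=> nxy; elim: p => [|z p IH] /=; first by rewrite (negPf nxy). by rewrite eqxx. Qed.

Lemma lcp_dec (u v : seq A) : (exists r, v = u ++ r) \/ (exists r, u = v ++ r) \/
  exists x y t1 t2, x != y /\ u = lcp u v ++ x :: t1 /\ v = lcp u v ++ y :: t2.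
Proof.
elim: u v => [|x u IH] [|y v] /=.
- by left; exists [::].
- by left; exists (y :: v).
- by right; left; exists (x :: u).
case: (eqVneq x y) => [<-|nxy].
  case: (IH v) => [[r ->]|[[r ->]|[x1 [y1 [t1 [t2 [n [e1 e2]]]]]]]].
  + by left; exists r.
  + by right; left; exists r.
  + right; right; exists x1, y1, t1, t2; split => //; by rewrite /= -e1 -e2.
by right; right; exists x, y, u, v.
Qed.

Lemma keydec a b : a != b -> exists x y t1 t2, x != y /\
  f a = lcp (f a) (f b) ++ x :: t1 /\ f b = lcp (f a) (f b) ++ y :: t2.
Proof.
move=> nab; case: (lcp_dec (f a) (f b)) => [[r e]|[[r e]|//]].
  by move: nab; rewrite (Hpre e) eqxx.
by move: nab; rewrite (Hpre e) eqxx.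
Qed.

Definition preL a b := lex (f a) (f b).

Lemma abstract : unique_total_order (fun pre => forall p,
  (exists a b, a != b /\ p = lcp (f a) (f b)) ->
  order_preserving (fun x x' => exists t, f x = p ++ x' :: t) pre le).
Proof.
have Hl := Hle; case: Hl => Hr Ha Ht Htot.
exists preL; split.
- split.
  + move=> a; exact: lex_refl.
  + move=> a b /andP [h1 h2]; apply/eqP; apply/negPn/negP => nab.
    have [x [y [t1 [t2 [nxy [e1 e2]]]]]] := keydec nab.
    move: e1 e2; set q := lcp _ _ => e1 e2.
    move: h1 h2; rewrite /preL e1 e2 !lex_cat // 1?eq_sym // => h1 h2.
    by move: nxy; rewrite (Ha x y) ?h1 ?h2 ?eqxx.
  + move=> b a c; exact: lex_trans.
  + move=> a b; case: (eqVneq a b) => [->|nab]; first by rewrite /preL lex_refl.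
    have [x [y [t1 [t2 [nxy [e1 e2]]]]]] := keydec nab.
    move: e1 e2; set q := lcp _ _ => e1 e2.
    by rewrite /preL e1 e2 !lex_cat // 1?eq_sym // Htot.
- move=> p _ x y x' y' [t ex] [u ey] /andP [h nxy].
  case: (eqVneq x' y') => [<-|nxy']; first exact: Hr.
  by move: h; rewrite /preL ex ey lex_cat.
- move=> R' [Rr Ra Rt Rtot] HP x y.
  case: (eqVneq x y) => [<-|nxy]; first by rewrite Rr /preL lex_refl.
  have [a [b [t1 [t2 [nab [e1 e2]]]]]] := keydec nxy.
  have TP : exists a b, a != b /\ lcp (f x) (f y) = lcp (f a) (f b) by exists x, y.
  move: e1 e2 TP; set q := lcp _ _ => e1 e2 TP.
  rewrite /preL e1 e2 lex_cat //.
  case hR: (R' x y).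
    symmetry; apply: (HP q TP x y a b); [by exists t1|by exists t2|by rewrite /strict hR nxy].
  have hR2 : R' y x by move: (Rtot x y); rewrite hR.
  have hle : le b a.
    apply: (HP q TP y x b a); [by exists t2|by exists t1|by rewrite /strict hR2 eq_sym nxy].
  symmetry; apply/negP => hab; move: nab; by rewrite (Ha a b) ?hab ?hle ?eqxx.
Qed.

End Abs.

Lemma unique_ext (A : finType) (P Q : rel A -> Prop) :
  (forall R, P R <-> Q R) -> unique_total_order P -> unique_total_order Q.
Proof.
move=> H [R [h1 h2 h3]]; exists R; split => //; first by apply/H.
by move=> R' t q; apply: h3 => //; apply/H.
Qed.

Theorem mainTheorem18 (A : finType) (sigma : A -> seq A) (w : seq A) (le : rel A) :
  return_morphism sigma w -> total_order le ->
  unique_total_order (fun pre => left_order_preserving sigma pre le) /\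
  unique_total_order (fun pre => right_order_preserving sigma w pre le).
Proof.
move=> [[wne inj ne occ] _] Hle.
have sinj : forall a b, sigma a = sigma b -> a = b.
  move=> a b e; have : morph sigma [:: a] = morph sigma [:: b] by rewrite /morph /= e.
  by move/inj => [].
have occ0 : forall a, take (size w) (sigma a ++ w) = w.
  by move=> a; have /andP [_ /eqP] := (proj2 (occ a 0) (or_introl erefl)); rewrite drop0.
split.
- apply: (@unique_ext _ (fun pre => forall p,
     (exists a b, a != b /\ p = lcp (rev (sigma a)) (rev (sigma b))) ->
     order_preserving (fun x x' => exists t, rev (sigma x) = p ++ x' :: t) pre le)).
  + have ph : forall p x x', (exists t, rev (sigma x) = p ++ x' :: t) <->
        phiL sigma (rev p) x x'.
      move=> p x x'; split => [[t e]|[t e]].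
        exists (rev t); by rewrite -[sigma x]revK e rev_cat rev_cons cat_rcons.
      exists (rev t); by rewrite e rev_cat rev_cons revK cat_rcons.
    move=> R; split => H.
      move=> s [a [b [nab es]]] x y x' y' h1 h2 hs.
      have es' : s = rev (lcp (rev (sigma a)) (rev (sigma b))) by [].
      rewrite es' in h1 h2.
      apply: (H _ _ x y x' y') => //; [by exists a, b| exact/ph| exact/ph].
    move=> p [a [b [nab ep]]] x y x' y' h1 h2 hs.
    apply: (H (rev p) _ x y x' y') => //; [|exact/ph|exact/ph].
    by exists a, b; split => //; rewrite ep.
  apply: abstract => //.
  move=> a b t /= e.
  have eb : sigma b = rev t ++ sigma a by rewrite -[sigma b]revK e rev_cat revK.
  case: (eqVneq t [::]) => [t0|tn].
    by apply: sinj; rewrite eb t0 /=.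
  have : occurs_at w (sigma b ++ w) (size (rev t)).
    rewrite /occurs_at eb -catA drop_size_cat // occ0 eqxx andbT size_cat leq_add2l.
    by rewrite size_cat leq_addl.
  move/occ => [|].
    by rewrite size_rev => /eqP; rewrite size_eq0 (negPf tn).
  rewrite eb size_cat -{1}[size (rev t)]addn0 => /eqP; rewrite eqn_add2l eq_sym size_eq0.
  by rewrite (negPf (ne a)).
- apply: abstract => //.
  move=> a b t e.
  move: e => /= e.
  have : occurs_at w (sigma b ++ w) (size (sigma a)).
    rewrite /occurs_at e -catA drop_size_cat // take_size_cat //.
    by rewrite eqxx !size_cat addnA leq_addr.
  move/occ => [/eqP|es]; first by rewrite size_eq0 (negPf (ne a)).
  move: e; rewrite -catA => /eqP; rewrite eqseq_cat // => /andP [/eqP h _].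
  by apply: sinj; rewrite h.
Qed.
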